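(* Let $(H,G,\alpha,f)$ be a normalized crossed system and let $H\times G$ denote the direct product of groups. There is a bijection between the set of group homomorphisms $\psi:H\#_\alpha^f G\to H\times G$ and the set of quadruples $(s,u,r,v)$, where $s:H\to G$ and $u:H\to H$ are group homomorphisms and $r:G\to H$, $v:G\to G$ are maps, satisfying for all $g,g_1,g_2\in G$, $h\in H$: $$v(g_1)v(g_2)=s(f(g_1,g_2))v(g_1g_2),\quad r(g)u(h)=u(g\triangleright h)r(g),$$ $$r(g_1)r(g_2)=u(f(g_1,g_2))r(g_1g_2),\quad v(g)s(h)=s(g\triangleright h)v(g).$$ Under this bijection $\psi(h,g)=\big(u(h)r(g),\ s(h)v(g)\big)$.
   Context: For groups $H,G$ and a map $\alpha:G\to\mathrm{Aut}(H)$ write $g\triangleright h:=\alpha(g)(h)$. A normalized crossed system is a quadruple $(H,G,\alpha,f)$ with maps $\alpha:G\to\mathrm{Aut}(H)$, $f:G\times G\to H$, $f(1,1)=1$, such that for all $g_1,g_2,g_3\in G$, $h\in H$: (WA) $g_1\triangleright(g_2\triangleright h)=f(g_1,g_2)\big((g_1g_2)\triangleright h\big)f(g_1,g_2)^{-1}$ and (CC) $f(g_1,g_2)f(g_1g_2,g_3)=\big(g_1\triangleright f(g_2,g_3)\big)f(g_1,g_2g_3)$. The crossed product $H\#_\alpha^f G$ is the group on the set $H\times G$ with multiplication $(h_1,g_1)\cdot(h_2,g_2)=\big(h_1(g_1\triangleright h_2)f(g_1,g_2),g_1g_2\big)$ and unit $(1,1)$. *)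

(* Defs.v *)
(* MathComp boot only (for ssrfun's `bijective`); groups are arbitrary
   (possibly infinite), so they are given as an explicit record of operations
   and axioms. *)
From mathcomp Require Import ssreflect ssrfun ssrbool.
Set Implicit Arguments. Unset Strict Implicit. Unset Printing Implicit Defensive.

Record group := Group {
  carrier :> Type;
  gmul : carrier -> carrier -> carrier;
  gone : carrier;
  ginv : carrier -> carrier;
  gmulA : forall x y z, gmul x (gmul y z) = gmul (gmul x y) z;
  gmul1l : forall x, gmul gone x = x;
  gmul1r : forall x, gmul x gone = x;
  gmulVl : forall x, gmul (ginv x) x = gone;
  gmulVr : forall x, gmul x (ginv x) = gone
}.
Arguments gmul {g}.
Arguments gone {g}.
Arguments ginv {g}.

(* Group homomorphism (multiplicative map; unit preservation follows). *)
Definition is_hom (A B : group) (phi : A -> B) : Prop :=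
  forall x y, phi (gmul x y) = gmul (phi x) (phi y).

Definition is_aut (A : group) (a : A -> A) : Prop := is_hom a /\ bijective a.

(* Normalized crossed system (H, G, alpha, f); g |> h := alpha g h. *)
Definition normalized_crossed_system (H G : group)
    (alpha : G -> H -> H) (f : G -> G -> H) : Prop :=
  [/\ forall g, is_aut (alpha g),
      f gone gone = gone,
      forall g1 g2 h, alpha g1 (alpha g2 h)
        = gmul (gmul (f g1 g2) (alpha (gmul g1 g2) h)) (ginv (f g1 g2)) &
      forall g1 g2 g3, gmul (f g1 g2) (f (gmul g1 g2) g3)
        = gmul (alpha g1 (f g2 g3)) (f g1 (gmul g2 g3))].

Definition cp_mul (H G : group) (alpha : G -> H -> H) (f : G -> G -> H)
    (x y : H * G) : H * G :=
  (gmul (gmul x.1 (alpha x.2 y.1)) (f x.2 y.2), gmul x.2 y.2).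

Definition dp_mul (H G : group) (x y : H * G) : H * G :=
  (gmul x.1 y.1, gmul x.2 y.2).

Definition is_cp_hom (H G : group) (alpha : G -> H -> H) (f : G -> G -> H)
    (psi : H * G -> H * G) : Prop :=
  forall x y, psi (cp_mul alpha f x y) = dp_mul (psi x) (psi y).

Definition CPHom (H G : group) (alpha : G -> H -> H) (f : G -> G -> H) :=
  {psi : H * G -> H * G | is_cp_hom alpha f psi}.

Record quad (H G : group) := Quad {
  qs : H -> G; qu : H -> H; qr : G -> H; qv : G -> G }.

Definition good_quad (H G : group) (alpha : G -> H -> H) (f : G -> G -> H)
    (q : quad H G) : Prop :=
  let: Quad s u r v := q in
  is_hom s /\ is_hom u /\
  [/\ forall g1 g2, gmul (v g1) (v g2) = gmul (s (f g1 g2)) (v (gmul g1 g2)),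
      forall g h, gmul (r g) (u h) = gmul (u (alpha g h)) (r g),
      forall g1 g2, gmul (r g1) (r g2) = gmul (u (f g1 g2)) (r (gmul g1 g2)) &
      forall g h, gmul (v g) (s h) = gmul (s (alpha g h)) (v g)].

Definition GoodQuad (H G : group) (alpha : G -> H -> H) (f : G -> G -> H) :=
  {q : quad H G | good_quad alpha f q}.

(* Main.v *)
Require Import Defs.
From mathcomp Require Import ssreflect ssrfun ssrbool.
From Stdlib Require Import ProofIrrelevance FunctionalExtensionality.

Section GL.
Variable A : group.
Lemma mulIg (x y z : A) : gmul x y = gmul x z -> y = z.
Proof.
move=> E. have := f_equal (gmul (ginv x)) E.
by rewrite !gmulA gmulVl !gmul1l.
Qed.
Lemma idem1 (x : A) : gmul x x = x -> x = gone.
Proof. move=> E; apply: (@mulIg x); by rewrite gmul1r. Qed.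
End GL.

Lemma hom1 (A B : group) (phi : A -> B) : is_hom phi -> phi gone = gone.
Proof. move=> Hp; apply: idem1; by rewrite -Hp gmul1l. Qed.

Lemma sig_eq (T : Type) (P : T -> Prop) (x y : {a : T | P a}) :
  proj1_sig x = proj1_sig y -> x = y.
Proof.
case: x => a pa; case: y => b pb /= E; subst b; f_equal; apply: proof_irrelevance.
Qed.

Section Main.
Variables (H G : group) (alpha : G -> H -> H) (f : G -> G -> H).
Hypothesis Hcs : normalized_crossed_system alpha f.

Lemma alpha1 h : alpha gone h = h.
Proof.
case: Hcs => Ha Hf WA _.
case: (Ha gone) => _ [ai K1 K2].
have := WA gone gone h; rewrite Hf gmul1l gmul1l.
rewrite -(gmul1l (ginv gone)) gmulVr gmul1r => E.
by rewrite -{2}(K1 h) -E K1.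
Qed.

Lemma alphag1 g : alpha g gone = gone.
Proof. case: Hcs => Ha _ _ _; case: (Ha g) => Hh _; exact: hom1. Qed.

Lemma f1g g : f gone g = gone.
Proof.
case: Hcs => _ Hf _ CC.
have := CC gone gone g; rewrite alpha1 !gmul1l Hf gmul1l.
move=> E; apply: idem1; by rewrite -E.
Qed.

Lemma fg1 g : f g gone = gone.
Proof.
case: Hcs => _ Hf _ CC.
have := CC g gone gone; rewrite !gmul1r Hf alphag1 gmul1l.
move=> E; by apply: idem1.
Qed.

Definition psi_of (q : quad H G) (x : H * G) : H * G :=
  (gmul (qu q x.1) (qr q x.2), gmul (qs q x.1) (qv q x.2)).

Lemma psi_of_hom (q : quad H G) : good_quad alpha f q -> is_cp_hom alpha f (psi_of q).
Proof.
case: q => s u r v [Hs [Hu [E1 E2 E3 E4]]] [h1 g1] [h2 g2].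
rewrite /psi_of /cp_mul /dp_mul /=; f_equal.
- rewrite !Hu.
  rewrite -(gmulA (u h1) (r g1)) -(gmulA (u h1)) -(gmulA (u h1)); f_equal.
  rewrite (gmulA (r g1)) E2 -!gmulA; f_equal.
  by rewrite E3.
- rewrite !Hs.
  rewrite -(gmulA (s h1) (v g1)) -(gmulA (s h1)) -(gmulA (s h1)); f_equal.
  rewrite (gmulA (v g1)) E4 -!gmulA; f_equal.
  by rewrite E1.
Qed.

Definition quad_of (psi : H * G -> H * G) : quad H G :=
  Quad (fun h => (psi (h, gone)).2) (fun h => (psi (h, gone)).1)
       (fun g => (psi (gone, g)).1) (fun g => (psi (gone, g)).2).

Lemma split_hg (h : H) (g : G) :
  cp_mul alpha f (h, gone) (gone, g) = (h, g).
Proof. by rewrite /cp_mul /= alphag1 f1g !gmul1r gmul1l. Qed.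

Lemma quad_of_good psi : is_cp_hom alpha f psi -> good_quad alpha f (quad_of psi).
Proof.
move=> Hp.
have Hhh : forall h1 h2, cp_mul alpha f (h1, gone) (h2, gone) = (gmul h1 h2, gone).
  by move=> h1 h2; rewrite /cp_mul /= alpha1 f1g !gmul1r.
have Hgg : forall g1 g2, cp_mul alpha f (gone, g1) (gone, g2)
    = cp_mul alpha f (f g1 g2, gone) (gone, gmul g1 g2).
  by move=> g1 g2; rewrite split_hg /cp_mul /= alphag1 !gmul1l.
have Hgh : forall g h, cp_mul alpha f (gone, g) (h, gone)
    = cp_mul alpha f (alpha g h, gone) (gone, g).
  by move=> g h; rewrite split_hg /cp_mul /= fg1 gmul1l gmul1r gmul1r.
rewrite /quad_of /=; split; [|split; [|split]].
- by move=> h1 h2; rewrite -Hhh Hp.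
- by move=> h1 h2; rewrite -Hhh Hp.
- by move=> g1 g2; have := f_equal psi (Hgg g1 g2); rewrite !Hp /dp_mul; case=> _ E; exact: E.
- by move=> g h; have := f_equal psi (Hgh g h); rewrite !Hp /dp_mul; case=> E _; exact: E.
- by move=> g1 g2; have := f_equal psi (Hgg g1 g2); rewrite !Hp /dp_mul; case=> E _; exact: E.
- by move=> g h; have := f_equal psi (Hgh g h); rewrite !Hp /dp_mul; case=> _ E; exact: E.
Qed.

End Main.

Theorem corollary2p6 (H G : group) (alpha : G -> H -> H) (f : G -> G -> H)
    (Hcs : normalized_crossed_system alpha f) :
  exists Phi : GoodQuad alpha f -> CPHom alpha f,
    bijective Phi /\
    forall (q : GoodQuad alpha f) (h : H) (g : G),
      proj1_sig (Phi q) (h, g)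
        = (gmul (qu (proj1_sig q) h) (qr (proj1_sig q) g),
           gmul (qs (proj1_sig q) h) (qv (proj1_sig q) g)).
Proof.
pose Phi := fun q : GoodQuad alpha f =>
  exist (is_cp_hom alpha f) (@psi_of H G (proj1_sig q)) (@psi_of_hom H G alpha f (proj1_sig q) (proj2_sig q)).
pose Psi := fun p : CPHom alpha f =>
  exist (good_quad alpha f) (@quad_of H G (proj1_sig p)) (@quad_of_good H G alpha f Hcs _ (proj2_sig p)).
exists Phi; split; last by [].
exists Psi.
- case=> [[s u r v] Hq]; apply: sig_eq => /=.
  have Hq' := Hq; case: Hq' => [Hs [Hu [E1 E2 E3 E4]]].
  have s1 := @hom1 _ _ _ Hs; have u1 := @hom1 _ _ _ Hu.
  have v1 : v gone = gone by apply: idem1; rewrite E1 (@fg1 _ _ _ _ Hcs) s1 gmul1l gmul1r.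
  have r1 : r gone = gone by apply: idem1; rewrite E3 (@fg1 _ _ _ _ Hcs) u1 gmul1l gmul1r.
  rewrite /quad_of /psi_of /=; f_equal; apply: functional_extensionality => x /=;
  by rewrite ?v1 ?r1 ?s1 ?u1 ?gmul1r ?gmul1l.
- case=> [p Hp]; apply: sig_eq => /=.
  apply: functional_extensionality => [[h g]].
  by rewrite /psi_of /quad_of /= -(@split_hg _ _ _ _ Hcs h g) Hp.
Qed.
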